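(* Let $0\le\alpha<n$, $0<\delta<1$, $1\le r\le\infty$, $m$ a nonnegative integer, $\tilde\alpha=m\delta+\alpha$ and $\tilde\delta\le\min\{\delta,\tilde\alpha-n/r\}$. If $w\in\mathbb{H}(r,\tilde\alpha,\tilde\delta)$, then $\tilde\delta=\tilde\alpha-n/r$.
   Context: A weight is a nonnegative locally integrable function; $w(B)=\int_Bw$; $x_B$ is the center of the ball $B$; $r'$ the conjugate exponent. For $0\le\alpha<n$, $0\le\delta\le1$, $\tilde\alpha=m\delta+\alpha$, $\tilde\delta\le\delta$, a pair $(w,v)$ belongs to $\mathbb{H}(r,\tilde\alpha,\tilde\delta)$ if for some $C$ and every ball $B$: if $1<r\le\infty$, $|B|^{(\delta-\tilde\delta)/n}\big(\int_{\mathbb{R}^n}\frac{v^{r'}(y)}{(|B|^{1/n}+|x_B-y|)^{r'(n-\tilde\alpha+\delta)}}dy\big)^{1/r'}\le C\frac{w(B)}{|B|}$; if $r=1$, $|B|^{(\delta-\tilde\delta)/n}\big\|\frac{v(\cdot)}{(|B|^{1/n}+|x_B-\cdot|)^{n-\tilde\alpha+\delta}}\big\|_\infty\le C\frac{w(B)}{|B|}$. A single weight $w$ is in the class if $(w,w)$ is. *)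

(* Defs.v *)
From HB Require Import structures.
From mathcomp Require Import all_boot all_order all_algebra.
From mathcomp Require Import all_classical all_reals all_analysis.
From mathcomp Require Import ess_sup_inf.
Set Implicit Arguments. Unset Strict Implicit. Unset Printing Implicit Defensive.
Import Order.TTheory GRing.Theory Num.Theory.
Import numFieldNormedType.Exports.
Local Open Scope classical_set_scope.
Local Open Scope ring_scope.

Section weights.
Context {R : realType} {n : nat}.
(* R^n is modelled by n.-tuple R, with its product (= Borel) sigma-algebra
   from the library (generated by the coordinate maps). *)
Notation Rn := (n.-tuple R).

Definition edist (x y : Rn) : R :=
  Num.sqrt (\sum_(i < n) (tnth x i - tnth y i) ^+ 2).

Definition eball (c : Rn) (rho : R) : set Rn := [set y | edist c y < rho].

Definition box (a b : Rn) : set Rn :=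
  [set x | forall i : 'I_n, tnth a i <= tnth x i <= tnth b i].

(* mu is Lebesgue measure on R^n: it gives every box its volume.
   (This characterizes Lebesgue measure uniquely on the Borel sets.) *)
Definition is_lebesgue (mu : {measure set Rn -> \bar R}) : Prop :=
  forall a b : Rn, (forall i, tnth a i <= tnth b i) ->
    mu (box a b) = (\prod_(i < n) (tnth b i - tnth a i))%:E.

Definition weight (mu : {measure set Rn -> \bar R}) (w : Rn -> R) : Prop :=
  [/\ forall x, 0 <= w x, measurable_fun setT w &
      forall c rho, 0 < rho -> mu.-integrable (eball c rho) (EFin \o w)].

Definition wmeas (mu : {measure set Rn -> \bar R}) (w : Rn -> R) (B : set Rn)
  : \bar R := (\int[mu]_(x in B) (w x)%:E)%E.

Definition conj_exp (r : \bar R) : R :=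
  if r is EFin s then s / (s - 1) else 1.


Definition inH (mu : {measure set Rn -> \bar R}) (r : \bar R)
  (talpha tdelta delta : R) (w v : Rn -> R) : Prop :=
  exists C : R, forall (c : Rn) (rho : R), 0 < rho ->
    let B := eball c rho in
    let volB := fine (mu B) in
    let g := fun y => volB `^ (n%:R^-1) + edist c y in
    let e := n%:R - talpha + delta in
    let rhs := (C%:E * wmeas mu w B * (volB^-1)%:E)%E in
    if r == 1%E then
      ((volB `^ ((delta - tdelta) / n%:R))%:E *
        ess_sup mu (fun y => (v y / g y `^ e)%:E) <= rhs)%E
    else
      let r' := conj_exp r in
      ((volB `^ ((delta - tdelta) / n%:R))%:E *
        (\int[mu]_(y in setT) ((v y `^ r') / g y `^ (r' * e))%:E) `^ (r'^-1)
        <= rhs)%E.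

End weights.

Definition n_over_r {R : realType} (n : nat) (r : \bar R) : R :=
  if r is EFin s then n%:R / s else 0.

(* Main.v *)
Require Import Defs.
From HB Require Import structures.
From mathcomp Require Import all_boot all_order all_algebra.
From mathcomp Require Import all_classical all_reals all_analysis.
From mathcomp Require Import ess_sup_inf.
From mathcomp Require Import ring lra.
From mathcomp Require Import measurable_realfun lebesgue_integral.
Import Order.TTheory GRing.Theory Num.Theory.
Import numFieldNormedType.Exports.
Local Open Scope classical_set_scope.
Local Open Scope ring_scope.
Set Implicit Arguments. Unset Strict Implicit.
Local Notation edist := Defs.edist.
Local Notation measurable_funB := measurable_realfun.measurable_funB.
Local Notation measurable_funD := measurable_realfun.measurable_funD.
Local Notation measurable_funM := measurable_realfun.measurable_funM.

Section geom.
Variables (R : realType) (n : nat).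
Local Notation Rn := (n.-tuple R).

Lemma edist_ge0 (c y : Rn) : 0 <= edist c y.
Proof. exact: sqrtr_ge0. Qed.

Lemma measurable_edist (c : Rn) : measurable_fun setT (edist c).
Proof.
have -> : edist c = Num.sqrt \o (fun y : Rn => \sum_(i < n) (tnth c i - tnth y i) ^+ 2) by [].
apply: measurableT_comp.
  apply: measurable_realfun.continuous_measurable_fun.
  exact: sqrt_continuous.
apply: measurable_sum => i.
apply: (measurableT_comp (measurable_realfun.exprn_measurable 2)).
apply: measurable_funB => //; exact: measurable_tnth.
Qed.

Lemma measurable_eball (c : Rn) rho : measurable (eball c rho).
Proof.
have := measurable_edist c measurableT (measurable_itv `]-oo, rho[).
rewrite setTI.
congr measurable; apply/seteqP; split => y /=; rewrite /eball /= in_itv /=; by [].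
Qed.

Lemma measurable_box (a b : Rn) : measurable (box a b).
Proof.
have -> : box a b = \bigcap_(i in [set: 'I_n])
   ((fun y : Rn => tnth y i) @^-1` `[tnth a i, tnth b i]).
  apply/seteqP; split => y /=.
    by move=> H i _; rewrite /= in_itv /= H.
  by move=> H i; have := H i I; rewrite /= in_itv.
apply: fin_bigcap_measurable; first exact: finite_finset.
move=> i _.
have := measurable_tnth i measurableT (measurable_itv `[tnth a i, tnth b i]).
by rewrite setTI.
Qed.


Definition tsh (c : Rn) (h : R) : Rn := [tuple tnth c i + h | i < n].

Lemma tnth_tsh c h i : tnth (tsh c h) i = tnth c i + h.
Proof. by rewrite /tsh tnth_mktuple. Qed.

Lemma sum_sq_ge (c y : Rn) i :
  (tnth c i - tnth y i) ^+ 2 <= \sum_(j < n) (tnth c j - tnth y j) ^+ 2.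
Proof.
rewrite (bigD1 i) //= lerDl; apply: sumr_ge0 => j _; exact: sqr_ge0.
Qed.

Lemma ball_sub_box c rho : eball c rho `<=` box (tsh c (- rho)) (tsh c rho).
Proof.
move=> y; rewrite /eball /box /= /edist => H i.
rewrite !tnth_tsh.
have : `|tnth c i - tnth y i| < rho.
  rewrite -sqrtr_sqr; apply: le_lt_trans H.
  by rewrite ler_sqrt ?sum_sq_ge // sumr_ge0 // => j _; exact: sqr_ge0.
rewrite ltr_norml => /andP[h1 h2].
apply/andP; split; lra.
Qed.

Lemma box_sub_ball c rho : 0 < rho -> (0 < n)%N ->
  box (tsh c (- (rho / (2 * n%:R)))) (tsh c (rho / (2 * n%:R))) `<=` eball c rho.
Proof.
move=> rho0 n0 y; rewrite /eball /box /= /edist => H.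
set h := rho / (2 * n%:R).
have n0' : 0 < n%:R :> R by rewrite ltr0n.
have h0 : 0 < h by rewrite /h divr_gt0 // mulr_gt0.
have Hi : forall i, (tnth c i - tnth y i) ^+ 2 <= h ^+ 2.
  move=> i; have := H i; rewrite !tnth_tsh => /andP[h1 h2].
  rewrite -ler_sqrt ?sqr_ge0 // !sqrtr_sqr (gtr0_norm h0) ler_norml.
  rewrite -/h in h1 h2; apply/andP; split; lra.
have S : \sum_(j < n) (tnth c j - tnth y j) ^+ 2 <= h ^+ 2 *+ n.
  apply: le_trans (ler_sum _ (fun j _ => Hi j)) _.
  by rewrite sumr_const card_ord.
have hn : h ^+ 2 *+ n < rho ^+ 2.
  rewrite /h -mulr_natr.
  have -> : (rho / (2 * n%:R)) ^+ 2 * n%:R = rho ^+ 2 / (4 * n%:R).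
    by field; rewrite gt_eqF.
  rewrite ltr_pdivrMr ?mulr_gt0 // ltr_pMr ?exprn_gt0 //.
  have : 1 <= n%:R :> R by rewrite ler1n.
  lra.
rewrite -(gtr0_norm rho0) -sqrtr_sqr ltr_sqrt ?exprn_gt0 //.
exact: le_lt_trans S hn.
Qed.

End geom.

Section vol.
Variables (R : realType) (n : nat) (mu : {measure set (n.-tuple R) -> \bar R}).
Hypothesis leb : is_lebesgue mu.
Local Notation Rn := (n.-tuple R).

Lemma box_vol (c : Rn) h : 0 <= h ->
  mu (box (tsh c (- h)) (tsh c h)) = ((2 * h) ^+ n)%:E.
Proof.
move=> h0; rewrite leb; last by move=> i; rewrite !tnth_tsh; lra.
congr EFin.
rewrite (eq_bigr (fun _ => 2 * h)); last by move=> i _; rewrite !tnth_tsh; ring.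
by rewrite prodr_const card_ord.
Qed.

Lemma vol_ub (c : Rn) rho : 0 < rho -> (mu (eball c rho) <= ((2 * rho) ^+ n)%:E)%E.
Proof.
move=> rho0; rewrite -(box_vol c); last exact: ltW.
apply: le_measure; rewrite ?inE; [exact: measurable_eball|exact: measurable_box|].
exact: ball_sub_box.
Qed.

Lemma vol_lb (c : Rn) rho : 0 < rho -> (0 < n)%N ->
  (((rho / n%:R) ^+ n)%:E <= mu (eball c rho))%E.
Proof.
move=> rho0 n0.
have n0' : 0 < n%:R :> R by rewrite ltr0n.
have -> : rho / n%:R = 2 * (rho / (2 * n%:R)) by field; rewrite gt_eqF.
rewrite -(box_vol c); last by rewrite ltW // divr_gt0 // mulr_gt0.
apply: le_measure; rewrite ?inE; [exact: measurable_box|exact: measurable_eball|].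
exact: box_sub_ball.
Qed.

End vol.

Section mass.
Variables (R : realType) (n : nat) (mu : {measure set (n.-tuple R) -> \bar R}).
Local Notation Rn := (n.-tuple R).
Variable w : Rn -> R.

Lemma mass_pos (c : Rn) : weight mu w -> ~ (\forall x \ae mu, w x = 0) ->
  exists rho, 0 < rho /\ (0 < wmeas mu w (eball c rho))%E.
Proof.
move=> [w0 mw _] nae.
have [//|H] := pselect (exists rho, 0 < rho /\ (0 < wmeas mu w (eball c rho))%E).
exfalso; apply: nae.
have Hk : forall k : nat,
    mu.-negligible (~` [set x | eball c k.+1%:R x -> (EFin \o w) x = cst 0%E x]).
  move=> k.
  have mB := measurable_eball c k.+1%:R.
  have mwB : measurable_fun (T:=Rn) (eball c k.+1%:R) (EFin \o w).
    by apply/measurable_EFinP; exact: measurable_funS mw.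
  have := (ae_eq_integral_abs mu mB mwB).1.
  apply.
  have e : (\int[mu]_(x in eball c k.+1%:R) `|(EFin \o w) x|)%E = wmeas mu w (eball c k.+1%:R).
    by apply: eq_integral => x _ /=; rewrite ger0_norm.
  rewrite e; apply/eqP; rewrite eq_le; apply/andP; split; last first.
    by apply: integral_ge0 => x _; rewrite lee_fin.
  rewrite leNgt; apply/negP => Hp; apply: H; exists k.+1%:R; split => //.
have := negligible_bigcup Hk.
apply: negligibleS => x /= wx0.
have [k Hk'] : exists k : nat, edist c x < k.+1%:R.
  exists (Num.truncn (edist c x)).
  by rewrite truncnS_gt.
exists k => //= /(_ Hk') []; exact: wx0.
Qed.

End mass.

Section young.
Variable R : realType.

Lemma young_tangent (p t x : R) : 1 <= p -> 0 < t -> 0 <= x ->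
  p * t `^ (p - 1) * x <= x `^ p + (p - 1) * t `^ p.
Proof.
move=> p1 t0 x0.
have [->|p1'] := eqVneq p 1.
  by rewrite subrr powRr0 powRr1 // mul0r addr0 !mul1r.
have p1s : 1 < p by rewrite lt_neqAle eq_sym p1' p1.
have p0 : 0 < p by lra.
have pm1 : 0 < p - 1 by lra.
have q0 : 0 < p / (p - 1) by rewrite divr_gt0.
have := @conjugate_powR R x (t `^ (p - 1)) p (p / (p - 1)) x0 (powR_ge0 _ _) p0 q0.
have -> : p^-1 + (p / (p - 1))^-1 = 1 by field; lra.
move=> /(_ erefl).
rewrite -powRrM.
have -> : (p - 1) * (p / (p - 1)) = p by field; lra.
move=> H.
have := ler_wpM2l (ltW p0) H.
have -> : p * (x `^ p / p + t `^ p / (p / (p - 1))) = x `^ p + (p - 1) * t `^ p.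
  by field; lra.
by have -> : p * t `^ (p - 1) * x = p * (x * t `^ (p - 1)) by ring.
Qed.

End young.

Section jensen.
Context d (T : measurableType d) (R : realType).
Variable mu : {measure set T -> \bar R}.
Local Open Scope ereal_scope.

Lemma jensen_int (D : set T) (f : T -> R) (V W p : R) : measurable D ->
  mu D = V%:E -> (0 < V)%R -> measurable_fun D f -> (forall x, D x -> 0 <= f x)%R ->
  \int[mu]_(x in D) (f x)%:E = W%:E -> (0 < W)%R -> (1 <= p)%R ->
  ((((W / V) `^ p * V)%R)%:E <= \int[mu]_(x in D) (f x `^ p)%:E).
Proof.
move=> mD muD V0 mf f0 intf W0 p1.
set t := (W / V)%R.
have t0 : (0 < t)%R by rewrite divr_gt0.
have p0 : (0 < p)%R by lra.
have mfp : measurable_fun D (fun x => f x `^ p)%R.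
  exact: (measurableT_comp (measurable_powR p) mf).
have H1 : ((p * t `^ (p - 1)) * W)%:E =
    \int[mu]_(x in D) ((p * t `^ (p - 1)) * f x)%R%:E.
  under eq_integral do rewrite EFinM.
  rewrite ge0_integralZl_EFin //.
  all: try by [rewrite intf | move=> x Dx; rewrite lee_fin f0 |
               exact/measurable_EFinP | rewrite mulr_ge0 // ?powR_ge0 // ltW].
have H2 : \int[mu]_(x in D) ((p * t `^ (p - 1)) * f x)%R%:E <=
    \int[mu]_(x in D) (f x `^ p + (p - 1) * t `^ p)%R%:E.
  apply: ge0_le_integral => //.
  - by move=> x Dx; rewrite lee_fin mulr_ge0 // ?f0 // mulr_ge0 // ?powR_ge0 // ltW.
  - apply/measurable_EFinP; apply: measurable_funM => //.
  - apply/measurable_EFinP; apply: measurable_funD => //.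
  - by move=> x Dx; rewrite lee_fin young_tangent // f0.
have H3 : \int[mu]_(x in D) (f x `^ p + (p - 1) * t `^ p)%R%:E =
    \int[mu]_(x in D) (f x `^ p)%:E + ((p - 1) * t `^ p * V)%:E.
  under eq_integral do rewrite EFinD.
  rewrite ge0_integralD //.
  - by rewrite integral_cst // muD.
  - by move=> x _; rewrite lee_fin powR_ge0.
  - exact/measurable_EFinP.
  - by move=> x _; rewrite lee_fin mulr_ge0 ?powR_ge0 //; lra.
have Hall := H2; rewrite -H1 H3 in Hall; move: Hall.
have tW : (W = t * V)%R by rewrite /t divfK // gt_eqF.
have -> : (p * t `^ (p - 1) * W = p * (t `^ p * V))%R.
  by rewrite tW -(mulr_powRB1 (ltW t0) p0); ring.
set I := \int[mu]_(x in D) _.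
have I0 : 0 <= I by apply: integral_ge0 => x _; rewrite lee_fin powR_ge0.
case: I I0 => [i| |] //= i0; last by move=> _; exact: leey.
rewrite -EFinD !lee_fin => H.
have : (0 <= t `^ p * V)%R by rewrite mulr_ge0 ?powR_ge0 // ltW.
nra.
Qed.

End jensen.

Section powb.
Variable R : realType.

Lemma gpow_bound (a k x e : R) : 0 < a -> 1 <= k -> a <= x -> x <= k * a ->
  x `^ e <= k `^ `|e| * a `^ e.
Proof.
move=> a0 k1 ax xk.
have x0 : 0 < x by exact: lt_le_trans ax.
have k0 : 0 < k by lra.
have [e0|e0] := leP 0 e.
  rewrite ger0_norm // -powRM; last 2 first; [exact: ltW|exact: ltW|].
  by apply: ge0_ler_powR => //; rewrite nnegrE ltW // mulr_gt0.
rewrite ltr0_norm //.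
have -> : x `^ e = (x `^ (- e))^-1 by rewrite -powRN opprK.
have -> : a `^ e = (a `^ (- e))^-1 by rewrite -powRN opprK.
have h1 : 1 <= k `^ (- e) by rewrite -(powRr0 k); apply: ler_powR => //; lra.
have h2 : a `^ (- e) <= x `^ (- e).
  by apply: ge0_ler_powR => //; rewrite ?nnegrE ?ltW //; lra.
have pa : 0 < a `^ (- e) by apply: powR_gt0.
have px : 0 < x `^ (- e) by apply: powR_gt0.
apply: (@le_trans _ _ ((a `^ (- e))^-1)).
  by rewrite lef_pV2 ?posrE.
by rewrite ler_peMl // invr_ge0 ltW.
Qed.

End powb.

Section powV.
Variable R : realType.
Lemma powRV (x r : R) : 0 < x -> (x^-1) `^ r = (x `^ r)^-1.
Proof.
move=> x0.
have xi0 : 0 <= x^-1 by rewrite invr_ge0 ltW.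
have := @powRM R x (x^-1) r (ltW x0) xi0.
rewrite mulfV ?gt_eqF // powR1 => h.
have hp : x `^ r != 0 by rewrite gt_eqF // powR_gt0.
by apply: (mulfI hp); rewrite -h mulfV.
Qed.
End powV.

Section core.
Variables (R : realType) (n : nat) (mu : {measure set (n.-tuple R) -> \bar R}).
Hypotheses (leb : is_lebesgue mu) (n0 : (0 < n)%N).
Variable w : n.-tuple R -> R.
Hypothesis wgt : weight mu w.
Variable c : n.-tuple R.

Definition Vb rho := fine (mu (eball c rho)).
Definition ab rho := Vb rho `^ (n%:R^-1).
Definition Wb rho := fine (wmeas mu w (eball c rho)).

Let n0' : 0 < n%:R :> R. Proof. by rewrite ltr0n. Qed.

Lemma Vb_E rho : 0 < rho -> mu (eball c rho) = (Vb rho)%:E.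
Proof.
move=> rho0; rewrite /Vb fineK //.
rewrite ge0_fin_numE; last exact: measure_ge0.
exact: le_lt_trans (vol_ub leb c rho0) (ltry _).
Qed.

Lemma Vb_lb rho : 0 < rho -> (rho / n%:R) ^+ n <= Vb rho.
Proof. by move=> rho0; rewrite -lee_fin -Vb_E //; exact: vol_lb. Qed.

Lemma Vb_gt0 rho : 0 < rho -> 0 < Vb rho.
Proof.
move=> rho0; apply: lt_le_trans (Vb_lb rho0).
by rewrite exprn_gt0 // divr_gt0.
Qed.

Lemma ab_lb rho : 0 < rho -> rho / n%:R <= ab rho.
Proof.
move=> rho0.
have h0 : 0 <= rho / n%:R by rewrite ltW // divr_gt0.
have ninv : 0 <= n%:R^-1 :> R by rewrite invr_ge0 ltW.
have := @ge0_ler_powR R (n%:R^-1) ninv _ _ _ _ (Vb_lb rho0).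
rewrite -powR_mulrn // -powRrM mulfV ?gt_eqF // powRr1 //.
apply; rewrite nnegrE; [exact: powR_ge0| exact: ltW (Vb_gt0 rho0)].
Qed.

Lemma ab_gt0 rho : 0 < rho -> 0 < ab rho.
Proof. by move=> rho0; apply: lt_le_trans (ab_lb rho0); rewrite divr_gt0. Qed.

Lemma Vb_pow rho x : Vb rho `^ x = ab rho `^ (n%:R * x).
Proof. by rewrite /ab -powRrM mulrA mulVf ?gt_eqF // mul1r. Qed.

Lemma Wb_E rho : 0 < rho -> wmeas mu w (eball c rho) = (Wb rho)%:E.
Proof.
move=> rho0; case: wgt => w0 mw iw.
rewrite /Wb fineK //.
have := iw c rho rho0 => /integrableP [_ H].
rewrite ge0_fin_numE; last by apply: integral_ge0 => x _; rewrite lee_fin.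
apply: le_lt_trans H; apply: ge0_le_integral => //.
- exact: measurable_eball.
- by move=> x _; rewrite lee_fin.
- by apply/measurable_EFinP; exact: measurable_funS mw.
- apply/measurable_EFinP; apply: measurableT_comp => //.
  exact: measurable_funS mw.
- by move=> x _ /=; rewrite lee_fin ler_norm.
Qed.

Lemma gB rho y e : 0 < rho -> eball c rho y ->
  (ab rho + edist c y) `^ e <= (1 + n%:R) `^ `|e| * ab rho `^ e.
Proof.
move=> rho0 By; apply: gpow_bound.
- exact: ab_gt0.
- by rewrite lerDl.
- by rewrite lerDl edist_ge0.
- have h1 := ab_lb rho0.
  have h2 : rho <= n%:R * ab rho.
    have er : rho = n%:R * (rho / n%:R) by field; rewrite gt_eqF.
    by rewrite [X in X <= _]er ler_pM2l.
  move: By; rewrite /eball /= => h3.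
  have : 0 <= ab rho by exact: ltW (ab_gt0 rho0).
  lra.
Qed.

Lemma powX (G t V p : R) : 0 < G -> 0 < t -> 0 < V -> 0 < p ->
  ((G `^ p)^-1 * (t `^ p * V)) `^ (p^-1) = G^-1 * t * V `^ (p^-1).
Proof.
move=> G0 t0 V0 p0.
have pp : p * p^-1 = 1 by rewrite mulfV ?gt_eqF.
rewrite powRM ?invr_ge0 ?powR_ge0 ?mulr_ge0 ?powR_ge0 ?(ltW V0) //.
rewrite powRM ?powR_ge0 ?(ltW V0) //.
rewrite -powRV ?powR_gt0 // -!powRrM pp !powRr1 ?(ltW t0) //.
all: by rewrite ?mulrA ?invr_ge0 ?(ltW G0).
Qed.

Lemma mes_w : measurable_fun setT w.
Proof. by case: wgt. Qed.

Lemma w_ge0 x : 0 <= w x.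
Proof. by case: wgt. Qed.

Lemma case_fin (p A C e : R) rho : 0 < rho -> 1 <= p -> 0 < Wb rho ->
  ((Vb rho `^ A)%:E *
     (\int[mu]_(y in setT) ((w y `^ p) / (ab rho + edist c y) `^ (p * e))%:E) `^ (p^-1)
   <= C%:E * wmeas mu w (eball c rho) * ((Vb rho)^-1)%:E)%E ->
  Vb rho `^ A * Vb rho `^ (p^-1) <= C * ((1 + n%:R) `^ `|e| * ab rho `^ e).
Proof.
move=> rho0 p1 W0 H.
set V := Vb rho in H *; set a := ab rho in H *; set W := Wb rho in W0 *.
set G := (1 + n%:R) `^ `|e| * a `^ e.
have V0 : 0 < V := Vb_gt0 rho0.
have a0 : 0 < a := ab_gt0 rho0.
have p0 : 0 < p by lra.
have G0 : 0 < G by rewrite mulr_gt0 // powR_gt0 //; lra.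
have mB := measurable_eball c rho.
have gpos : forall y, 0 < a + edist c y.
  by move=> y; rewrite ltr_pwDl // edist_ge0.
have mg : measurable_fun setT (fun y => a + edist c y).
  by apply: measurable_funD => //; exact: measurable_edist.
have mint : measurable_fun setT (fun y => w y `^ p / (a + edist c y) `^ (p * e)).
  have -> : (fun y => w y `^ p / (a + edist c y) `^ (p * e)) =
      (fun y => w y `^ p * (a + edist c y) `^ (- (p * e))).
    by apply: funext => y; rewrite powRN.
  apply: measurable_funM.
    exact: (measurableT_comp (measurable_powR p) mes_w).
  exact: (measurableT_comp (measurable_powR _) mg).
have mwp : measurable_fun setT (fun y => w y `^ p).
  exact: (measurableT_comp (measurable_powR p) mes_w).
set J := (\int[mu]_(y in setT) _)%E in H.
have S1 : (\int[mu]_(y in eball c rho) ((w y `^ p) / (a + edist c y) `^ (p * e))%:E <= J)%E.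
  apply: ge0_subset_integral => //.
  - by apply/measurable_EFinP.
  - by move=> y _; rewrite lee_fin divr_ge0 // powR_ge0.
have S2 : (\int[mu]_(y in eball c rho) ((G `^ p)^-1 * w y `^ p)%:E <=
    \int[mu]_(y in eball c rho) ((w y `^ p) / (a + edist c y) `^ (p * e))%:E)%E.
  apply: ge0_le_integral => //.
  - by move=> y _; rewrite lee_fin mulr_ge0 // ?powR_ge0 // invr_ge0 powR_ge0.
  - apply/measurable_EFinP; apply: measurable_funM => //.
    exact: measurable_funS mwp.
  - by apply/measurable_EFinP; exact: measurable_funS mint.
  - move=> y By; rewrite lee_fin mulrC; apply: ler_wpM2l; first exact: powR_ge0.
    rewrite lef_pV2 ?posrE ?powR_gt0 //.
    rewrite [p * e]mulrC powRrM.
    apply: ge0_ler_powR; rewrite ?nnegrE ?powR_ge0 //; first lra.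
    - exact: ltW.
    - exact: gB.
have S3 : (\int[mu]_(y in eball c rho) ((G `^ p)^-1 * w y `^ p)%:E =
    ((G `^ p)^-1)%:E * \int[mu]_(y in eball c rho) (w y `^ p)%:E)%E.
  under eq_integral do rewrite EFinM.
  rewrite ge0_integralZl_EFin //.
  - by move=> y _; rewrite lee_fin powR_ge0.
  - by apply/measurable_EFinP; exact: measurable_funS mwp.
  - by rewrite invr_ge0 powR_ge0.
have S4 : ((((W / V) `^ p * V)%R)%:E <= \int[mu]_(y in eball c rho) (w y `^ p)%:E)%E.
  apply: jensen_int => //.
  - exact: Vb_E.
  - exact: measurable_funS mes_w.
  - by move=> x _; exact: w_ge0.
  - exact: Wb_E.
set X := ((G `^ p)^-1 * ((W / V) `^ p * V))%R.
have JX : (X%:E <= J)%E.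
  apply: le_trans S1; apply: le_trans S2; rewrite S3 EFinM.
  by apply: lee_wpmul2l => //; rewrite lee_fin invr_ge0 powR_ge0.
have X0 : 0 <= X by rewrite mulr_ge0 ?invr_ge0 ?powR_ge0 // mulr_ge0 ?powR_ge0 // ltW.
have JXp : ((X `^ (p^-1))%:E <= J `^ (p^-1))%E.
  rewrite -poweR_EFin; apply: gt0_ler_poweR => //.
  - by rewrite invr_ge0 ltW.
  - by rewrite in_itv /= lee_fin X0 leey.
  - rewrite in_itv /= leey andbT.
    by apply: le_trans JX; rewrite lee_fin.
have eX : X `^ (p^-1) = G^-1 * (W / V) * V `^ (p^-1).
  by rewrite /X powX // divr_gt0.
rewrite eX in JXp.
have L : ((V `^ A * (G^-1 * (W / V) * V `^ (p^-1)))%:E <=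
    C%:E * wmeas mu w (eball c rho) * (V^-1)%:E)%E.
  apply: le_trans H; rewrite EFinM.
  by apply: lee_wpmul2l => //; rewrite lee_fin powR_ge0.
move: L; rewrite Wb_E // -!EFinM lee_fin -/W => L.
have u0 : 0 < W / V by rewrite divr_gt0.
have L' : (V `^ A * V `^ (p^-1) * G^-1) * (W / V) <= C * (W / V).
  have e1 : V `^ A * (G^-1 * (W / V) * V `^ p^-1) = (V `^ A * V `^ (p^-1) * G^-1) * (W / V) by ring.
  have e2 : C * W * V^-1 = C * (W / V) by ring.
  by rewrite -e1 -e2.
rewrite ler_pM2r // in L'.
by rewrite -ler_pdivrMr // mulrC.
Qed.

Lemma case_one (A C e : R) rho : 0 < rho -> 0 < Wb rho ->
  ((Vb rho `^ A)%:E *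
     ess_sup mu (fun y => (w y / (ab rho + edist c y) `^ e)%:E)
   <= C%:E * wmeas mu w (eball c rho) * ((Vb rho)^-1)%:E)%E ->
  Vb rho `^ A <= C * ((1 + n%:R) `^ `|e| * ab rho `^ e).
Proof.
move=> rho0 W0 H.
set V := Vb rho in H *; set a := ab rho in H *; set W := Wb rho in W0 *.
set G := (1 + n%:R) `^ `|e| * a `^ e.
have V0 : 0 < V := Vb_gt0 rho0.
have a0 : 0 < a := ab_gt0 rho0.
have G0 : 0 < G by rewrite mulr_gt0 // powR_gt0 //; lra.
have mB := measurable_eball c rho.
have gpos : forall y, 0 < a + edist c y.
  by move=> y; rewrite ltr_pwDl // edist_ge0.
set f := fun y => w y / (a + edist c y) `^ e.
set M := ess_sup mu _ in H.
have muT : (0 < mu [set: n.-tuple R])%E.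
  apply: lt_le_trans (_ : (mu (eball c rho) <= _)%E).
    by rewrite Vb_E // lte_fin.
  by apply: le_measure; rewrite ?inE //.
have M0 : (0 <= M)%E.
  apply: (@ess_sup_ger _ _ _ mu f 0 muT) => t.
  by rewrite lee_fin /f divr_ge0 ?w_ge0 ?powR_ge0.
have aeM : \forall x \ae mu, ((f x)%:E <= M)%E by exact: ess_sup_ge.
clearbody M.
have key : ((W / (G * V))%:E <= M)%E.
  move: M0 aeM H; case: M => [m| |] //= m0 aeM _; last by rewrite leey.
  rewrite lee_fin in m0.
  have I1 : (W%:E <= \int[mu]_(y in eball c rho) (m * G)%:E)%E.
    rewrite -Wb_E //; apply: ae_ge0_le_integral => //.
    - by move=> y _; rewrite lee_fin w_ge0.
    - by apply/measurable_EFinP; exact: measurable_funS mes_w.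
    - by move=> y _; rewrite lee_fin mulr_ge0 // ltW.
    apply: filterS aeM => y fy By.
    rewrite lee_fin in fy; rewrite lee_fin.
    have gp : 0 < (a + edist c y) `^ e by rewrite powR_gt0.
    have -> : w y = f y * (a + edist c y) `^ e by rewrite /f divfK // gt_eqF.
    apply: ler_pM => //.
    - by rewrite /f divr_ge0 ?w_ge0 ?powR_ge0.
    - exact: ltW.
    - exact: gB.
  move: I1; rewrite integral_cst // Vb_E // -EFinM !lee_fin -/V => I1.
  by rewrite ler_pdivrMr ?mulr_gt0 ?powR_gt0 // mulrA.
have L : ((V `^ A * (W / (G * V)))%:E <=
    C%:E * wmeas mu w (eball c rho) * (V^-1)%:E)%E.
  apply: le_trans H; rewrite EFinM.
  by apply: lee_wpmul2l => //; rewrite lee_fin powR_ge0.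
move: L; rewrite Wb_E // -!EFinM lee_fin -/W => L.
have u0 : 0 < W / V by rewrite divr_gt0.
have L' : (V `^ A * G^-1) * (W / V) <= C * (W / V).
  have e1 : V `^ A * (W / (G * V)) = (V `^ A * G^-1) * (W / V).
    by field; rewrite !gt_eqF.
  have e2 : C * W * V^-1 = C * (W / V) by ring.
  by rewrite -e1 -e2.
rewrite ler_pM2r // in L'.
by rewrite -ler_pdivrMr // mulrC.
Qed.

Lemma final_contra (E e D rho0 : R) : 0 < E -> 0 < rho0 ->
  (forall rho, rho0 <= rho -> ab rho `^ (E + e) <= D * ab rho `^ e) -> False.
Proof.
move=> E0 r0 H.
set X := (`|D| + 1) `^ (E^-1).
have X0 : 0 <= X by exact: powR_ge0.
set rho := rho0 + n%:R * X.
have rr : rho0 <= rho by rewrite /rho lerDl mulr_ge0 // ltW.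
have rho0' : 0 < rho by exact: lt_le_trans rr.
have := H rho rr.
have a0 := ab_gt0 rho0'.
rewrite powRD; last by rewrite (gt_eqF a0) implybT.
have ae0 : 0 < ab rho `^ e by exact: powR_gt0.
rewrite ler_pM2r //.
apply/negP; rewrite -ltNge.
have h1 : X <= ab rho.
  apply: le_trans (ab_lb rho0').
  rewrite /rho ler_pdivlMr // [X * _]mulrC lerDr ltW //.
have h2 : X `^ E <= ab rho `^ E.
  by apply: ge0_ler_powR; rewrite ?nnegrE // ltW.
apply: lt_le_trans h2.
rewrite /X -powRrM mulVf ?gt_eqF // powRr1; last by rewrite addr_ge0.
have := ler_norm D; lra.
Qed.

End core.

Lemma conj_exp_facts (R : realType) (n : nat) (r : \bar R) :
  (1 <= r)%E -> r != 1%E ->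
  1 <= conj_exp r /\ n%:R * (conj_exp r)^-1 = n%:R - n_over_r n r.
Proof.
case: r => [s| |] //= r1 r1'.
  rewrite lee_fin in r1.
  have s1 : 1 < s.
    by rewrite lt_neqAle r1 andbT eq_sym; apply: contraNneq r1' => ->.
  split.
    by rewrite ler_pdivlMr ?mul1r; lra.
  rewrite invf_div; field; lra.
by rewrite invr1 mulr1 subr0.
Qed.

Unset Implicit Arguments.
Set Strict Implicit.

Theorem lemma2p4 (R : realType) (n : nat)
  (mu : {measure set (n.-tuple R) -> \bar R})
  (alpha delta : R) (m : nat) (r : \bar R) (tdelta : R)
  (w : n.-tuple R -> R) :
  is_lebesgue mu ->
  0 <= alpha -> alpha < n%:R ->
  0 < delta -> delta < 1 ->
  (1 <= r)%E ->
  tdelta <= Num.min delta ((m%:R * delta + alpha) - n_over_r n r) ->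
  weight mu w ->
  ~ (\forall x \ae mu, w x = 0) ->
  inH mu r (m%:R * delta + alpha) tdelta delta w w ->
  tdelta = (m%:R * delta + alpha) - n_over_r n r.
Proof.
move=> leb a0 an d0 d1 r1 htd wgt nae [C HC].
set ta := m%:R * delta + alpha in htd HC *.
have n0 : (0 < n)%N.
  by case: n mu w wgt nae HC an leb htd => // mu' w' _ _ _ an'; lra.
have n0' : 0 < n%:R :> R by rewrite ltr0n.
have nn0 : n%:R != 0 :> R by rewrite gt_eqF.
rewrite le_min in htd; case/andP: htd => _ htd.
have [//|neq] := eqVneq tdelta (ta - n_over_r n r).
have lt : tdelta < ta - n_over_r n r by rewrite lt_neqAle neq htd.
exfalso.
pose c : n.-tuple R := [tuple 0 | i < n].
have [rho0 [rho00 Wp]] := mass_pos c wgt nae.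
have Wpos : forall rho, rho0 <= rho -> 0 < Wb mu w c rho.
  move=> rho rr.
  have rho0' : 0 < rho by exact: lt_le_trans rr.
  rewrite -lte_fin -Wb_E //.
  apply: lt_le_trans Wp _.
  apply: ge0_subset_integral => //; try exact: measurable_eball.
  - apply/measurable_EFinP; exact: measurable_funS (mes_w wgt).
  - by move=> x _; rewrite lee_fin (w_ge0 wgt).
  - move=> y; rewrite /eball /=; move=> h; exact: lt_le_trans h rr.
set E := ta - tdelta - n_over_r n r.
have E0 : 0 < E by rewrite /E; lra.
set e := n%:R - ta + delta.
set K := (1 + n%:R) `^ `|e|.
apply: (@final_contra R n mu leb n0 c E e (C * K) rho0 E0 rho00) => rho rr.
have rho0' : 0 < rho by exact: lt_le_trans rr.
have := HC c rho rho0'.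
move=> /=.
have a0' := ab_gt0 leb n0 c rho0'.
have W0 := Wpos rho rr.
set A := (delta - tdelta) / n%:R.
case: ifPn => [/eqP r1e H|r1' H].
  have := @case_one R n mu leb n0 w wgt c A C e rho rho0' W0 H.
  rewrite Vb_pow // -/K -[C * K * _]mulrA.
  suff -> : n%:R * A = E + e by [].
  by rewrite /A /E /e r1e /=; field.
have [p1 hp] := conj_exp_facts n r1 r1'.
set p := conj_exp r in H p1 hp.
have := @case_fin R n mu leb n0 w wgt c p A C e rho rho0' p1 W0 H.
rewrite !Vb_pow // -powRD; last by rewrite (gt_eqF a0') implybT.
rewrite -/K -[C * K * _]mulrA.
suff -> : n%:R * A + n%:R * p^-1 = E + e by [].
by rewrite hp /A /E /e; field.
Qed.
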